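(* Let $0<\beta\le\bar\alpha$ be constants. Let $H$ be a fixed random variable with zero mean, unit variance and a density, and for $\mu\in\mathbb{R}$, $\sigma>0$ let $Z=\mu+\sigma H$ (so $Z$ has mean $\mu$ and variance $\sigma^2$), with density $f_Z$ and c.d.f. $F_Z$. Define the value of renewable energy $$\text{VoR}(\mu,\sigma)=\bar\alpha\int_{-\infty}^{F_Z^{-1}(\beta/\bar\alpha)} z\,f_Z(z)\,dz,$$ where $F_Z^{-1}(a)=\inf\{z:F_Z(z)=a\}$. Then $\text{VoR}$ is increasing in $\mu$ and non-increasing in $\sigma$. Consequently, since $Z(t)=X(t)-w(t)$ with $w(t)$ zero-mean and independent of the renewable energy $X(t)$, the value of renewable energy is increasing with the mean of $X(t)$ and non-increasing with the variance of $X(t)$ (when the distribution of $Z(t)$ varies in such a location–scale family).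
   Context: In the model, $X(t)$ is the renewable power available in slot $t$, $w(t)=\sum_n w_n(t)$ is the aggregate zero-mean random deviation of user loads (independent of $X(t)$), $Z(t)=X(t)-w(t)$ is the effective renewable energy, $\beta$ is the day-ahead power price and $\bar\alpha$ the expected real-time power price. $\text{VoR}$ is the reduction of the minimal expected procurement cost relative to $\beta L^{\mathsf{d}}$ (the cost without renewables) when the optimal base power is positive. *)

(* Defs.v *)
From HB Require Import structures.
From mathcomp Require Import all_boot all_order all_algebra.
From mathcomp Require Import all_classical all_reals all_analysis.
Set Implicit Arguments. Unset Strict Implicit. Unset Printing Implicit Defensive.
Import Order.TTheory GRing.Theory Num.Theory.
Local Open Scope classical_set_scope.
Local Open Scope ring_scope.

Definition locscale d (T : measurableType d) (R : realType)
  (H : T -> R) (mu sigma : R) : T -> R := fun w => mu + sigma * H w.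

Definition is_density d (T : measurableType d) (R : realType)
  (P : probability T R) (X : T -> R) (f : R -> R) : Prop :=
  measurable_fun [set: R] f /\ (forall x, 0 <= f x) /\
  forall A : set R, measurable A ->
    P (X @^-1` A) = (\int[@lebesgue_measure R]_(x in A) (f x)%:E)%E.

Definition cdfR d (T : measurableType d) (R : realType)
  (P : probability T R) (X : T -> R) (z : R) : R :=
  fine (P [set w | X w <= z]).

(* F^{-1}(a) = inf {z : F z = a}, as an extended real (+oo if the set is empty). *)
Definition qinv (R : realType) (F : R -> R) (a : R) : \bar R :=
  ereal_inf [set z%:E | z in [set z | F z = a]].

Definition VoR (R : realType) (alphabar beta : R) (fZ FZ : R -> R) : \bar R :=
  (alphabar%:E * \int[@lebesgue_measure R]_(z in [set z : R | (z%:E <= qinv FZ (beta / alphabar))%E])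
      (z * fZ z)%:E)%E.

(* Main.v *)
Require Import Defs.
From HB Require Import structures.
From mathcomp Require Import all_boot all_order all_algebra.
From mathcomp Require Import all_classical all_reals all_analysis.
From mathcomp Require Import measurable_realfun measurable_fun_approximation lebesgue_integral_nonneg lebesgue_integrable.
From mathcomp Require Import ring lra.
Import Order.TTheory GRing.Theory Num.Theory.
Local Open Scope classical_set_scope.
Local Open Scope ring_scope.
Import HBNNSimple.

Section dens.
Local Open Scope ereal_scope.
Context d (T : measurableType d) (R : realType) (P : probability T R).
Variables (X : {mfun T >-> R}) (f : R -> R).
Hypothesis hf : is_density P X f.

Lemma dens_ge0 (g : R -> \bar R) (E : set R) : (forall x, 0 <= g x) -> measurable E -> measurable_fun E g ->
  \int[@lebesgue_measure R]_(x in E) (g x * (f x)%:E) = \int[distribution P X]_(x in E) g x.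
Proof.
have [mf [f0 fint]] := hf.
set nu := distribution P X.
set mu := @lebesgue_measure R.
have mEf : measurable_fun [set: R] (EFin \o f) by exact/measurable_EFinP.
move=> g0 mE mg.
pose h := nnsfun_approx mE mg.
have -> : \int[nu]_(x in E) g x =
    lim (\int[nu]_(x in E) (EFin \o h n) x @[n --> \oo]).
  have fE x : E x -> g x = lim ((EFin \o h n) x @[n --> \oo]).
    by move=> Ex; apply/esym/cvg_lim => //; exact: cvg_nnsfun_approx.
  under eq_integral => x /[!inE] /fE -> //.
  apply: monotone_convergence => //.
  - move=> n; apply/measurable_EFinP.
    by apply: (measurable_funS measurableT) => //; exact/measurable_funP.
  - by move=> n x Ex //=; rewrite lee_fin.
  - by move=> x Ex a b ab; rewrite lee_fin; exact/lefP/nd_nnsfun_approx.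
have -> : \int[mu]_(x in E) (g x * (f x)%:E) =
    lim (\int[mu]_(x in E) ((EFin \o h n) x * (f x)%:E) @[n --> \oo]).
  have fg x : E x -> g x * (f x)%:E = lim (((EFin \o h n) x * (f x)%:E) @[n --> \oo]).
    by move=> Ex; apply/esym/cvg_lim => //; apply: cvgeZr;
      [by []|exact: cvg_nnsfun_approx].
  transitivity (\int[mu]_(x in E) limn (fun n => (EFin \o h n) x * (f x)%:E)).
    by apply: eq_integral => x /[!inE] /fg.
  apply: monotone_convergence => [//| | |].
  - move=> n; apply/emeasurable_funM; apply/measurable_funTS.
      have : measurable_fun [set: R] (EFin \o h n).
        by apply/measurable_EFinP; exact: measurable_funPT.
      exact.
    have := mf; move/measurable_EFinP. exact.
  - by move=> n x Ex /=; rewrite mule_ge0 ?lee_fin.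
  - move=> x Ex a b ab/=; rewrite lee_wpmul2r ?lee_fin//.
    by move/lefP: (nd_nnsfun_approx mE mg ab); apply.
suff suf n : \int[mu]_(x in E) ((EFin \o h n) x * (f x)%:E) =
    \int[nu]_(x in E) (EFin \o h n) x.
  by congr (limn _); apply/funext => n; rewrite suf.
transitivity (\int[nu]_(x in E)
   (\sum_(y \in range (h n)) (y * \1_(h n @^-1` [set y]) x)%:E)); last first.
  by apply: eq_integral => t tE; rewrite /= fimfunE -fsumEFin.
have indich m r : measurable_fun E (fun x => (r * \1_(h m @^-1` [set r]) x)%:E).
  by apply: (measurable_comp measurableT) => //; exact: measurable_funM.
rewrite ge0_integral_fsum//; last by move=> m y Ey; exact: nnfun_muleindic_ge0.
transitivity (\int[mu]_(x in E) (\sum_(y \in range (h n))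
    (y * \1_(h n @^-1` [set y]) x)%:E * (f x)%:E)).
  apply: eq_integral => x xE.
  rewrite -ge0_mule_fsuml => [|y]; last exact: nnfun_muleindic_ge0.
  by rewrite /= fimfunE -fsumEFin.
rewrite ge0_integral_fsum//; last 2 first.
  - move=> y; apply: emeasurable_funM; apply: measurable_funTS; last exact mEf.
    have : measurable_fun [set: R] (fun x => (y * \1_(h n @^-1` [set y]) x)%:E).
      apply/measurable_EFinP; apply: measurable_funM => //.
    exact.
  - move=> m y Ey; rewrite mule_ge0 ?lee_fin//.
    by rewrite -lee_fin EFinM nnfun_muleindic_ge0.
apply: eq_fsbigr => r rhn.
under [RHS]eq_integral do rewrite EFinM.
rewrite integralZl_indic_nnsfun => //.
under eq_integral do rewrite EFinM -muleA.
rewrite ge0_integralZl//.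
- congr (_ * _).
  transitivity (\int[mu]_(x in E `&` (h n @^-1` [set r])) (f x)%:E).
    by rewrite integral_mkcondr; apply: eq_integral => x _; rewrite epatch_indic muleC.
  rewrite -fint; last by apply: measurableI => //; exact: measurable_sfunP.
  by rewrite integral_indic// setIC.
- apply: emeasurable_funM; apply/measurable_funTS; last exact mEf.
    have : measurable_fun [set: R] (fun x => (\1_(h n @^-1` [set r]) x : R)%:E).
      apply/measurable_EFinP; apply/measurable_indicP; exact: (measurable_funPTI (h n) (measurable_set1 r)).
    exact.
- by move=> t Et; rewrite mule_ge0 ?lee_fin.
- by move: rhn; rewrite inE => -[t0 _ <-]; rewrite lee_fin.
Qed.

Lemma dens_pf (g : R -> \bar R) (E : set R) : (forall x, 0 <= g x) -> measurable E -> measurable_fun E g ->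
  \int[@lebesgue_measure R]_(x in E) (g x * (f x)%:E) = \int[P]_(w in X @^-1` E) g (X w).
Proof.
move=> g0 mE mg; rewrite dens_ge0// /distribution ge0_integral_pushforward//.
Qed.

Lemma dens_id (E : set R) : measurable E ->
  \int[@lebesgue_measure R]_(x in E) (x * f x)%:E = \int[P]_(w in X @^-1` E) (X w)%:E.
Proof.
have [mf [f0 fint]] := hf.
move=> mE; rewrite integralE [RHS]integralE.
have posE : forall x, ((fun x => (x * f x)%:E)^\+) x = ((fun y : R => y%:E)^\+) x * (f x)%:E.
  move=> x; rewrite !funeposE /= -!EFin_max -EFinM; congr EFin.
  have [hx|hx] := leP (0 : R)%R x.
    by rewrite (max_idPl (mulr_ge0 hx (f0 x))).
  rewrite mul0r; apply/max_idPr; exact: mulr_le0_ge0 (ltW hx) (f0 x).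
have negE : forall x, ((fun x => (x * f x)%:E)^\-) x = ((fun y : R => y%:E)^\-) x * (f x)%:E.
  move=> x; rewrite !funenegE /= -!EFin_max -EFinM; congr EFin.
  have [hx|hx] := leP (0 : R)%R (- x)%R.
    by rewrite -mulNr (max_idPl (mulr_ge0 hx (f0 x))).
  rewrite mul0r; apply/max_idPr; rewrite -mulNr; exact: mulr_le0_ge0 (ltW hx) (f0 x).
transitivity (\int[@lebesgue_measure R]_(x in E) (((fun y : R => y%:E)^\+) x * (f x)%:E) -
  \int[@lebesgue_measure R]_(x in E) (((fun y : R => y%:E)^\-) x * (f x)%:E)).
  by congr (_ - _); apply: eq_integral => x _; rewrite ?posE ?negE.
rewrite !dens_pf//.
- by congr (_ - _); apply: eq_integral => w _; rewrite ?funeposE ?funenegE.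
- by apply: measurable_funeneg; apply/measurable_EFinP.
- by apply: measurable_funepos; apply/measurable_EFinP.
Qed.
End dens.
Section main.
Local Open Scope ereal_scope.
Context d (T : measurableType d) (R : realType) (P : probability T R) (H : {RV P >-> R}).

Lemma le_qinv (F : R -> R) (a x : R) :
  (x%:E <= qinv F a) <-> (forall z, F z = a -> (x <= z)%R).
Proof.
split.
- move=> h z Fz; rewrite -lee_fin; apply: (le_trans h); apply: ereal_inf_lbound; by exists z.
- move=> h; apply: le_ereal_inf_tmp => _ [z Fz <-]; rewrite lee_fin; exact: h.
Qed.

Lemma meas_leQ (Q : \bar R) : measurable [set z : R | z%:E <= Q].
Proof.
case: Q => [q| |].
- rewrite (_ : [set z : R | z%:E <= q%:E] = `]-oo, q]%classic); first exact: measurable_itv.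
  by apply/seteqP; split => z /=; rewrite in_itv /= lee_fin.
- rewrite (_ : [set z : R | z%:E <= +oo] = setT) //.
  by apply/seteqP; split => z //= _; rewrite leey.
- rewrite (_ : [set z : R | z%:E <= -oo] = set0) //.
  by apply/seteqP; split => z //=; rewrite leeNy_eq.
Qed.

Lemma cdfR_ls mu sigma z : (0 < sigma)%R ->
  cdfR P (locscale H mu sigma) z = cdfR P H ((z - mu) / sigma)%R.
Proof.
move=> s0; rewrite /cdfR /locscale; congr (fine (P _)).
apply/seteqP; split => w /=; rewrite ler_pdivlMr //.
- by move=> h; nra.
- by move=> h; nra.
Qed.

Lemma preimB mu sigma a : (0 < sigma)%R ->
  (locscale H mu sigma) @^-1` [set z | z%:E <= qinv (cdfR P (locscale H mu sigma)) a]
  = [set w | (H w)%:E <= qinv (cdfR P H) a].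
Proof.
move=> s0; apply/seteqP; split => w /= /le_qinv h; apply/le_qinv.
- move=> s Fs; have := h (mu + sigma * s)%R.
  rewrite cdfR_ls // (_ : ((mu + sigma * s - mu) / sigma = s)%R); last first.
    by field; rewrite gt_eqF.
  move=> /(_ Fs); rewrite /locscale => hh; nra.
- move=> z Fz; have := h ((z - mu) / sigma)%R; rewrite -cdfR_ls // => /(_ Fz).
  rewrite ler_pdivlMr // /locscale => hh; nra.
Qed.

Lemma mHle (x : R) : measurable [set w | (H w <= x)%R].
Proof.
rewrite (_ : [set w | (H w <= x)%R] = H @^-1` `]-oo, x]%classic).
  exact: measurable_funPTI.
by apply/seteqP; split => w /=; rewrite in_itv.
Qed.

Lemma lim_ge (F : (set T)^nat) x : (forall n, measurable (F n)) ->
  {homo F : n m / (n <= m)%N >-> (m <= n)%O} ->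
  (forall n, x <= P (F n)) -> x <= P (\bigcap_n F n).
Proof.
move=> mF ndF hF.
have mI : measurable (\bigcap_n F n) by apply: bigcap_measurable => [|n _]; [exists 0%N|exact: mF].
have cv := @nonincreasing_cvg_mu _ _ _ P F
  (le_lt_trans (probability_le1 _ (mF 0%N)) (ltry 1)) mF mI ndF.
rewrite -(cvg_lim _ cv) //; apply: lime_ge; first by apply/cvg_ex; eexists; exact: cv.
exact: nearW.
Qed.

Lemma PB_ge a : (0 < a)%R -> (a <= 1)%R ->
  a%:E <= P [set w | (H w)%:E <= qinv (cdfR P H) a].
Proof.
set Q := qinv _ a => a0 a1.
have key x : Q < x%:E -> a%:E <= P (H @^-1` `]-oo, x]%classic).
  move=> Qx.
  have : ~ (x%:E <= Q) by rewrite leNgt Qx.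
  move/le_qinv/existsNP => [s /not_implyP [Fs /negP]]; rewrite -ltNge => sx.
  have <- : P [set w | (H w <= s)%R] = a%:E.
    rewrite -Fs /cdfR fineK //; exact: fin_num_measure (mHle s).
  apply: le_measure; rewrite ?inE; [exact: mHle | exact: measurable_funPTI |].
  by move=> w /= hw; rewrite in_itv /=; exact: le_trans hw (ltW sx).
case eQ : Q => [q| |].
- rewrite (_ : [set w | (H w)%:E <= q%:E] = H @^-1` (\bigcap_k `]-oo, (q + k.+1%:R^-1)%R]%classic)); last first.
    by rewrite -itvNycEbigcap; apply/seteqP; split => w /=; rewrite in_itv /= lee_fin.
  rewrite preimage_bigcap; apply: lim_ge.
  + by move=> n; exact: measurable_funPTI.
  + move=> m n mn; apply/subsetPset => w /=; rewrite !in_itv /= => /le_trans; apply.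
    by rewrite lerD2l lef_pV2 ?posrE // ler_nat.
  + move=> n; apply: key; rewrite eQ lte_fin ltrDl invr_gt0 //.
- rewrite (_ : [set w | (H w)%:E <= +oo] = setT); last first.
    by apply/seteqP; split => w //= _; rewrite leey.
  by rewrite probability_setT lee_fin.
- exfalso.
  have : a%:E <= P (\bigcap_n (H @^-1` `]-oo, (- n%:R)%R]%classic)).
    apply: lim_ge.
    + by move=> n; exact: measurable_funPTI.
    + move=> m n mn; apply/subsetPset => w /=; rewrite !in_itv /= => /le_trans; apply.
      by rewrite lerN2 ler_nat.
    + by move=> n; apply: key; rewrite eQ ltNyr.
  rewrite (_ : \bigcap_n _ = set0); last first.
    rewrite -subset0 => t /(_ (Num.bound (H t)) I).
    by rewrite /= in_itv/= leNgt => /negP; apply; rewrite ltrNl unstable.ltrNbound.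
  by rewrite measure0 lee_fin leNgt a0.
Qed.

Lemma int_le0 a : P.-integrable setT (EFin \o H) -> 'E_P[H] = 0 ->
  \int[P]_(w in [set w | (H w)%:E <= qinv (cdfR P H) a]) (H w)%:E <= 0.
Proof.
move=> intH EH.
have mEH : measurable_fun setT (EFin \o H) by apply/measurable_EFinP; exact: measurable_funPT.
case eQ : (qinv _ a) => [q| |].
- rewrite (_ : [set w | (H w)%:E <= q%:E] = [set w | (H w <= q)%R]); last first.
    by apply/seteqP; split => w /=; rewrite lee_fin.
  have mB := mHle q.
  have [hq|hq] := leP q 0%R.
    rewrite -(integral0 P [set w | (H w <= q)%R]); apply: le_integral => //.
    + exact: integrableS intH.
    + exact: integrable0.
    + by move=> w; rewrite inE /= => hw; rewrite lee_fin; exact: le_trans hw hq.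
  have := @integral_setU _ _ _ P [set w | (H w <= q)%R] (~` [set w | (H w <= q)%R]) (EFin \o H) mB (measurableC mB).
  rewrite setUv => /(_ (measurable_funTS mEH)).
  have dj : [disjoint [set w | (H w <= q)%R] & ~` [set w | (H w <= q)%R]].
    by rewrite disj_set2E setICr.
  move=> /(_ dj) /esym.
  have -> : \int[P]_(x in setT) (EFin \o H) x = 0 by rewrite -EH expectation_def.
  move=> e0; rewrite -e0; apply: leeDl; apply: integral_ge0 => w /= hw.
  rewrite lee_fin; apply: le_trans (ltW hq) _; rewrite leNgt; apply/negP => hw'.
  by apply: hw; exact: ltW.
- rewrite (_ : [set w | (H w)%:E <= +oo] = setT); last first.
    by apply/seteqP; split => w //= _; rewrite leey.
  by rewrite -EH expectation_def.
- rewrite (_ : [set w | (H w)%:E <= -oo] = set0); last first.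
    by apply/seteqP; split => w //=; rewrite leeNy_eq.
  by rewrite integral_set0.
Qed.

Lemma VoR_eq alphabar beta mu sigma f : (0 < sigma)%R ->
  P.-integrable setT (EFin \o H) ->
  is_density P (locscale H mu sigma) f ->
  VoR alphabar beta f (cdfR P (locscale H mu sigma)) =
  alphabar%:E * (mu%:E * P [set w | (H w)%:E <= qinv (cdfR P H) (beta / alphabar)]
    + sigma%:E * \int[P]_(w in [set w | (H w)%:E <= qinv (cdfR P H) (beta / alphabar)]) (H w)%:E).
Proof.
move=> s0 intH hf.
set B := [set w | _].
have mB : measurable B by exact: measurable_funPTI (meas_leQ _).
have mZ : measurable_fun setT (locscale H mu sigma).
  rewrite /locscale; apply: measurable_funD => //; apply: measurable_funM => //.
pose Zm : {mfun T >-> R} := HB.pack (locscale H mu sigma) (isMeasurableFun.Build _ _ _ _ _ mZ).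
have hf' : is_density P Zm f := hf.
rewrite /VoR (@dens_id _ _ _ P Zm f hf' _ (meas_leQ _)).
rewrite (_ : Zm @^-1` _ = B); last exact: preimB.
congr (_ * _).
transitivity (\int[P]_(w in B) (mu%:E + sigma%:E * (H w)%:E)).
  by apply: eq_integral => w _; rewrite /= /locscale EFinD EFinM.
rewrite integralD //.
- rewrite integralZl //; last exact: integrableS intH.
  by rewrite integral_cst.
- exact: finite_measure_integrable_cst.
- by apply: integrableZl => //; exact: integrableS intH.
Qed.

End main.


Theorem lemma2 (R : realType) (d : measure_display) (T : measurableType d)
  (P : probability T R) (H : {RV P >-> R}) (g : R -> R) (alphabar beta : R) :
  0 < beta -> beta <= alphabar ->
  P.-integrable [set: T] (EFin \o H) ->
  P.-integrable [set: T] (EFin \o (fun w => H w ^+ 2)) ->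
  ('E_P[H] = 0)%E ->
  variance P H = 1%E ->
  is_density P H g ->
  (forall (mu1 mu2 sigma : R) (f1 f2 : R -> R),
     0 < sigma -> mu1 < mu2 ->
     is_density P (locscale H mu1 sigma) f1 ->
     is_density P (locscale H mu2 sigma) f2 ->
     (VoR alphabar beta f1 (cdfR P (locscale H mu1 sigma))
      < VoR alphabar beta f2 (cdfR P (locscale H mu2 sigma)))%E)
  /\
  (forall (mu sigma1 sigma2 : R) (f1 f2 : R -> R),
     0 < sigma1 -> sigma1 <= sigma2 ->
     is_density P (locscale H mu sigma1) f1 ->
     is_density P (locscale H mu sigma2) f2 ->
     (VoR alphabar beta f2 (cdfR P (locscale H mu sigma2))
      <= VoR alphabar beta f1 (cdfR P (locscale H mu sigma1)))%E).

Proof.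
move=> b0 ba intH intH2 EH VH hg.
have a0 : (0 < alphabar)%R by exact: lt_le_trans b0 ba.
have apos : (0 < beta / alphabar)%R by rewrite divr_gt0.
have a1 : (beta / alphabar <= 1)%R by rewrite ler_pdivrMr // mul1r.
have mB : measurable [set w | ((H w)%:E <= qinv (cdfR P H) (beta / alphabar))%E].
  by have := measurable_funPTI H (@meas_leQ R (qinv (cdfR P H) (beta / alphabar))).
have [p PBE] : exists p, P [set w | ((H w)%:E <= qinv (cdfR P H) (beta / alphabar))%E] = p%:E.
  by exists (fine (P [set w | ((H w)%:E <= qinv (cdfR P H) (beta / alphabar))%E])); rewrite fineK // fin_num_measure.
have [e IBE] : exists e, (\int[P]_(w in [set w | ((H w)%:E <= qinv (cdfR P H) (beta / alphabar))%E]) (H w)%:E)%E = e%:E.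
  exists (fine (\int[P]_(w in [set w | ((H w)%:E <= qinv (cdfR P H) (beta / alphabar))%E]) (H w)%:E)%E).
  by rewrite fineK //; apply: integrable_fin_num => //; exact: integrableS intH.
have pa : (beta / alphabar <= p)%R by rewrite -lee_fin -PBE; exact: PB_ge.
have e0 : (e <= 0)%R by rewrite -lee_fin -IBE; exact: int_le0.
split.
- move=> mu1 mu2 sigma f1 f2 s0 mu12 hf1 hf2.
  rewrite (@VoR_eq _ _ _ P H alphabar beta mu1 sigma f1 s0 intH hf1).
  rewrite (@VoR_eq _ _ _ P H alphabar beta mu2 sigma f2 s0 intH hf2).
  rewrite PBE IBE.
  have E x y : (alphabar%:E * (x%:E * p%:E + y%:E * e%:E) = (alphabar * (x * p + y * e))%:E)%E.
    by rewrite EFinM EFinD !EFinM.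
  rewrite !E lte_fin.
  have p0 : (0 < p)%R by exact: lt_le_trans apos pa.
  have : (0 < alphabar * p * (mu2 - mu1))%R.
    by rewrite !mulr_gt0 // subr_gt0.
  nra.
- move=> mu s1 s2 f1 f2 s10 s12 hf1 hf2.
  have s20 : (0 < s2)%R by exact: lt_le_trans s10 s12.
  rewrite (@VoR_eq _ _ _ P H alphabar beta mu s2 f2 s20 intH hf2).
  rewrite (@VoR_eq _ _ _ P H alphabar beta mu s1 f1 s10 intH hf1).
  rewrite PBE IBE.
  have E x y : (alphabar%:E * (x%:E * p%:E + y%:E * e%:E) = (alphabar * (x * p + y * e))%:E)%E.
    by rewrite EFinM EFinD !EFinM.
  rewrite !E lee_fin.
  have : (0 <= alphabar * (s2 - s1) * (- e))%R.
    by rewrite !mulr_ge0 // ?subr_ge0 ?oppr_ge0 // ltW.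
  nra.
Qed.
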